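(* Let $\mathcal{A}=(a_i)_{i=1}^\infty$ be a weakly increasing sequence of positive integers, $r$ a positive integer and $k>2r$. Suppose that $\gcd A=1$ for all $(k-2r)$-multisubsets $A$ of $\{a_1,\ldots,a_k\}$. Then the sequence $(p_\mathcal{A}(n,k))_{n\ge0}$ is asymptotically $r$-log-concave.
   Context: The restricted partition function $p_\mathcal{A}(n,k)$ is defined by $\sum_{n\ge0}p_\mathcal{A}(n,k)x^n=\prod_{i=1}^k(1-x^{a_i})^{-1}$ (partitions of $n$ with parts in the multiset $\{a_1,\ldots,a_k\}$, equal values with different indices counting as distinct colors). A $j$-multisubset of $\{a_1,\ldots,a_k\}$ is a sub-multiset obtained by choosing $j$ of the $k$ indices. For a real sequence $\omega=(w_i)_{i\ge0}$ define $\widehat{\mathcal L}\omega=(w_{i+1}^2-w_iw_{i+2})_{i\ge0}$ and $\widehat{\mathcal L}^j\omega=\widehat{\mathcal L}(\widehat{\mathcal L}^{j-1}\omega)$. The sequence $\omega$ is asymptotically $r$-log-concave if there is $N$ such that $(\widehat{\mathcal L}^j\omega)_i>0$ for all $j\in\{1,\ldots,r\}$ and all $i\geq N$. *)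

(* Defs.v *)
From mathcomp Require Import all_boot all_order all_algebra.
Set Implicit Arguments. Unset Strict Implicit. Unset Printing Implicit Defensive.
Import Order.TTheory GRing.Theory Num.Theory.

(* p_A(n,k): number of partitions of n with parts among a_0,...,a_{k-1}
   (indices as colours), i.e. the coefficient of x^n in
   prod_{i<k} (1 - x^{a_i})^{-1}.  Defined by the recursion coming from
   multiplying by the last factor: the multiplicity j of part a_{k-1}
   satisfies j * a_{k-1} <= n.  (For a_{k-1} > 0.) *)
Fixpoint pA (a : nat -> nat) (k n : nat) : nat :=
  match k with
  | 0 => (n == 0)%N
  | k'.+1 => \sum_(0 <= j < (n %/ a k').+1) pA a k' (n - j * a k')
  end.

Definition Lhat (R : pzRingType) (w : nat -> R) : nat -> R :=
  fun i => (w i.+1 ^+ 2 - w i * w i.+2)%R.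

Definition Lhat_iter (R : pzRingType) (j : nat) (w : nat -> R) : nat -> R :=
  iter j (@Lhat R) w.

Definition asymp_r_log_concave (R : numDomainType) (r : nat) (w : nat -> R) : Prop :=
  exists N : nat, forall j i : nat, (1 <= j <= r)%N -> (N <= i)%N ->
    (0 < Lhat_iter j w i)%R.

(* Main.v *)
Require Import Defs.
From mathcomp Require Import all_boot all_order all_algebra.
From mathcomp Require Import all_field ring lra zify.
Set Implicit Arguments. Unset Strict Implicit. Unset Printing Implicit Defensive.

Lemma sum_sub (f : nat -> nat) b t : (0 < b)%N ->
  (\sum_(0 <= l < t.+1) f (l * b) <= \sum_(0 <= l < (t * b).+1) f l)%N.
Proof.
move=> b0; elim: t => [|t IH]; first by rewrite !big_nat1 mul0n.
rewrite big_nat_recr //= [X in (_ <= X)%N](@big_cat_nat _ _ _ (t * b).+1) //=; last first.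
  by rewrite ltnS mulSn leq_addl.
apply: leq_add => //.
rewrite mulSn addnC big_nat_recr /=; last by rewrite -addn1 leq_add2l.
by rewrite leq_addl.
Qed.

Lemma pA_lower (a : nat -> nat) L j t : (0 < L)%N -> (forall i, (i < j)%N -> a i %| L)%N ->
  (forall i, 0 < a i)%N -> (pA (fun _ => 1%N) j t <= pA a j (t * L))%N.
Proof.
move=> L0; elim: j t => [|j IH] t hL ha.
  by rewrite /= muln_eq0 (negbTE (lt0n_neq0 L0)) orbF.
rewrite /=.
have [b eb] : exists b, L = (b * a j)%N by exists (L %/ a j); rewrite divnK // hL.
have b0 : (0 < b)%N by move: L0; rewrite eb muln_gt0 => /andP[].
rewrite divn1 eb mulnA mulnK //.
apply: leq_trans (sum_sub (fun l => pA a j (t * b * a j - l * a j)) t b0).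
rewrite big_nat [X in (_ <= X)%N]big_nat; apply: leq_sum => l /andP[_ hl].
rewrite muln1 -mulnBl -mulnBl -mulnA -eb.
by apply: IH => // i hi; apply: hL; rewrite ltnS ltnW.
Qed.

Lemma pow_step m T : (T.+1 ^ m.+1 <= T ^ m.+1 + m.+1 * T.+1 ^ m)%N.
Proof.
elim: m => [|m IH]; first by rewrite !expn1 expn0 muln1 addn1.
have hA : (T ^ m.+1 <= T.+1 ^ m.+1)%N by rewrite leq_exp2r.
rewrite (expnS T.+1 m.+1) (expnS T m.+1) (expnS T.+1 m).
move: IH hA; rewrite (expnS T.+1 m).
set A := (T ^ m.+1)%N; set B := (T.+1 ^ m)%N => IH hA.
nia.
Qed.

Lemma sum_pow m t :
  ((t.+1) ^ m.+1 <= m.+1 * \sum_(0 <= l < t.+1) ((t - l).+1) ^ m)%N.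
Proof.
elim: t => [|t IH]; first by rewrite big_nat1 !exp1n muln1.
rewrite big_nat_recl //= subn0 mulnDr.
have e : (\sum_(0 <= i < t.+1) (t.+1 - i.+1).+1 ^ m = \sum_(0 <= i < t.+1) (t - i).+1 ^ m)%N.
  by apply: eq_bigr => i _; rewrite subSS.
rewrite e; apply: leq_trans (pow_step m t.+1) _.
by rewrite addnC leq_add2l.
Qed.

Lemma H_lower m t : ((t.+1) ^ m <= pA (fun _ => 1%N) m.+1 t * m`!)%N.
Proof.
elim: m t => [|m IH] t.
  rewrite expn0 fact0 muln1 /= divn1 big_nat_recr //= muln1 subnn /=.
  by rewrite leq_addl.
rewrite factS /= divn1 (mulnC m.+1) mulnA big_distrl /=.
apply: leq_trans (sum_pow m t) _; rewrite mulnC leq_mul2r; apply/orP; right.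
rewrite big_nat [X in (_ <= X)%N]big_nat; apply: leq_sum => l _.
by rewrite muln1.
Qed.

Import Order.TTheory GRing.Theory Num.Theory.
Local Open Scope ring_scope.

Definition act (p : {poly rat}) (f : nat -> rat) (n : nat) : rat :=
  \sum_(i < size p) p`_i * f (n + i)%N.

Lemma act_widen (p : {poly rat}) f n N : (size p <= N)%N ->
  act p f n = \sum_(i < N) p`_i * f (n + i)%N.
Proof.
move=> hN; rewrite /act (big_ord_widen N (fun i => p`_i * f (n + i)%N) hN).
rewrite big_mkcond /=; apply: eq_bigr => i _.
by case: ifP => // /negbT; rewrite -leqNgt => /(leq_sizeP _ _) ->; rewrite ?mul0r.
Qed.

Lemma actD (p q : {poly rat}) f n : act (p + q) f n = act p f n + act q f n.
Proof.
set N := maxn (size p) (size q).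
rewrite (@act_widen (p + q) f n N); last by rewrite (leq_trans (size_polyD _ _)).
rewrite (@act_widen p f n N) ?leq_maxl // (@act_widen q f n N) ?leq_maxr //.
by rewrite -big_split /=; apply: eq_bigr => i _; rewrite coefD mulrDl.
Qed.

Lemma actZ c (p : {poly rat}) f n : act (c *: p) f n = c * act p f n.
Proof.
rewrite (@act_widen (c *: p) f n (size p)) ?size_scale_leq // /act mulr_sumr.
by apply: eq_bigr => i _; rewrite coefZ mulrA.
Qed.

Lemma actN (p : {poly rat}) f n : act (- p) f n = - act p f n.
Proof. by rewrite -scaleN1r actZ mulN1r. Qed.

Lemma actB (p q : {poly rat}) f n : act (p - q) f n = act p f n - act q f n.
Proof. by rewrite actD actN. Qed.

Lemma act1 f n : act 1 f n = f n.
Proof. by rewrite /act size_poly1 big_ord1 coef1 mul1r addn0. Qed.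

Lemma actC c f n : act c%:P f n = c * f n.
Proof. by rewrite -[c%:P]mulr1 mul_polyC actZ act1. Qed.

Lemma act0 f n : act 0 f n = 0.
Proof. by rewrite /act size_poly0 big_ord0. Qed.

Lemma act_shift (p : {poly rat}) f n m : act p (fun x => f (x + m)%N) n = act p f (n + m)%N.
Proof. by apply: eq_bigr => i _; rewrite addnAC. Qed.

Lemma actMX (p : {poly rat}) f n : act (p * 'X) f n = act p f (n.+1).
Proof.
rewrite (@act_widen (p * 'X) f n (size p).+1); last first.
  by rewrite (leq_trans (size_polyMleq _ _)) // size_polyX addn2.
rewrite big_ord_recl coefMX /= mul0r add0r /act.
by apply: eq_bigr => i _; rewrite coefMX /= /bump /= add1n addnS addSn.
Qed.

Lemma act_ext (p : {poly rat}) f g n : (forall m, f m = g m) -> act p f n = act p g n.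
Proof. by move=> e; apply: eq_bigr => i _; rewrite e. Qed.

Lemma act_zero (p : {poly rat}) n : act p (fun _ => 0) n = 0.
Proof. by rewrite /act big1 // => i _; rewrite mulr0. Qed.

Lemma actM (p q : {poly rat}) f n : act (p * q) f n = act p (act q f) n.
Proof.
elim/poly_ind: p q f n => [|p c IH] q f n.
  by rewrite mul0r act0 act0.
rewrite mulrDl actD -mulrA -(commr_polyX q) IH mul_polyC actZ actD actMX actC.
congr (_ + _).
rewrite -(addn1 n) -act_shift; apply: act_ext => m; by rewrite actMX addn1.
Qed.

Lemma actXn a f n : act ('X^a) f n = f (n + a)%N.
Proof.
elim: a n => [|a IH] n; first by rewrite expr0 act1 addn0.
by rewrite exprSr actMX IH addSnnS.
Qed.

Lemma actXn1 a f n : act ('X^a - 1) f n = f (n + a)%N - f n.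
Proof. by rewrite actB actXn act1. Qed.

Lemma actX1 f n : act ('X - 1) f n = f n.+1 - f n.
Proof. by rewrite -['X]expr1 actXn1 addn1. Qed.

Definition dlt (p : {poly rat}) : {poly rat} := p \Po ('X + 1) - p.

Lemma horner_dlt (p : {poly rat}) (x : rat) : (dlt p).[x] = p.[x + 1] - p.[x].
Proof. by rewrite /dlt hornerD hornerN horner_comp !hornerE. Qed.

Lemma coefXD1n i j : (('X + 1 : {poly rat}) ^+ i)`_j = 'C(i, j)%:R.
Proof.
rewrite exprD1n coef_sum.
under eq_bigr => l _ do rewrite coefMn coefXn.
case: (leqP j i) => hji.
  rewrite (bigD1 (Ordinal (leq_ltn_trans hji (ltnSn i)) : 'I_i.+1)) //= eqxx.
  rewrite big1 ?addr0 // => l /= hl.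
  rewrite eq_sym; case: eqP => [e|_]; last by rewrite mul0rn.
  by move: hl; rewrite -(inj_eq val_inj) /= e eqxx.
rewrite bin_small // big1 // => l _; case: eqP => [e|_]; last by rewrite mul0rn.
by move: (ltn_ord l); rewrite -e ltnS leqNgt hji.
Qed.

Lemma coef_dlt (p : {poly rat}) j : (dlt p)`_j = \sum_(i < size p) p`_i * 'C(i, j)%:R - p`_j.
Proof.
rewrite /dlt coefB comp_polyE coef_sum; congr (_ - _).
by apply: eq_bigr => i _; rewrite coefZ coefXD1n.
Qed.

Lemma sum_widen (p : {poly rat}) (F : nat -> rat) N : (size p <= N)%N ->
  \sum_(i < size p) p`_i * F i = \sum_(i < N) p`_i * F i.
Proof.
move=> hN; rewrite (big_ord_widen N (fun i => p`_i * F i) hN).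
rewrite big_mkcond /=; apply: eq_bigr => i _.
by case: ifP => // /negbT; rewrite -leqNgt => /(leq_sizeP _ _) ->; rewrite ?mul0r.
Qed.

Lemma dlt_top (p : {poly rat}) m : (size p <= m.+1)%N ->
  (size (dlt p) <= m)%N /\ (dlt p)`_m.-1 = m%:R * p`_m.
Proof.
move=> hs; split.
  apply/leq_sizeP => j hj; rewrite coef_dlt (sum_widen (fun i => 'C(i, j)%:R) hs) big_ord_recr /=.
  rewrite big1; last by move=> i _; rewrite bin_small ?mulr0 // (leq_trans (ltn_ord i)).
  rewrite add0r; case: (ltngtP j m) => hjm.
  - by move: hj; rewrite leqNgt hjm.
  - by rewrite bin_small // mulr0 (leq_sizeP _ _ hs) ?subrr.
  - by rewrite hjm binn mulr1 subrr.
case: m hs => [|m] hs /=.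
  rewrite mul0r coef_dlt (sum_widen (fun i => 'C(i, 0)%:R) hs) big_ord1 bin0 mulr1 subrr //.
rewrite coef_dlt (sum_widen (fun i => 'C(i, m)%:R) hs) !big_ord_recr /=.
rewrite big1; last by move=> i _; rewrite bin_small ?mulr0.
rewrite binn binSn mulr1 add0r addrAC subrr add0r mulrC //.
Qed.

Lemma dltD p q : dlt (p + q) = dlt p + dlt q.
Proof. by rewrite /dlt comp_polyD; ring. Qed.

Lemma dltZ c p : dlt (c *: p) = c *: dlt p.
Proof. by rewrite /dlt comp_polyZ scalerBr. Qed.

Lemma dltC c : dlt c%:P = 0.
Proof. by rewrite /dlt comp_polyC subrr. Qed.

Lemma size_coef0 (p : {poly rat}) m : (size p <= m.+1)%N -> p`_m = 0 -> (size p <= m)%N.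
Proof.
move=> hs h0; apply/leq_sizeP => j hj; case: (ltngtP j m) => hjm.
- by move: hj; rewrite leqNgt hjm.
- exact: (leq_sizeP _ _ hs).
- by rewrite hjm.
Qed.

Lemma topM (p q : {poly rat}) a b : (size p <= a.+1)%N -> (size q <= b.+1)%N ->
  (size (p * q)%R <= (a + b).+1)%N /\ (p * q)`_(a + b) = p`_a * q`_b.
Proof.
move=> hp hq; split.
  by apply: (leq_trans (size_polyMleq p q)); lia.
rewrite coefM (bigD1 (Ordinal (leq_ltn_trans (leq_addr b a) (ltnSn _)))) //= addKn.
rewrite big1 ?addr0 // => j hj.
case: (ltngtP j a) => hja.
- by rewrite (leq_sizeP _ _ hq) ?mulr0 // ltn_subRL ltn_add2r.
- by rewrite (leq_sizeP _ _ hp) ?mul0r.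
- by move: hj; rewrite -(inj_eq val_inj) /= hja eqxx.
Qed.

Lemma antidiff m (q : {poly rat}) : (size q <= m)%N ->
  exists Q : {poly rat}, (size Q <= m.+1)%N /\ dlt Q = q.
Proof.
elim: m q => [|m IH] q hq.
  move: hq; rewrite leqn0 size_poly_eq0 => /eqP ->.
  by exists 0; rewrite size_poly0 -polyC0 dltC.
set c := q`_m.
set Q0 : {poly rat} := (c / (m.+1)%:R) *: 'X^(m.+1).
have hQ0 : (size Q0 <= m.+2)%N by rewrite (leq_trans (size_scale_leq _ _)) // size_polyXn.
have [hd hdc] := dlt_top hQ0.
have hc : (dlt Q0)`_m = c.
  by rewrite hdc /Q0 coefZ coefXn eqxx mulr1 mulrC divfK // pnatr_eq0.
have hq' : (size (q - dlt Q0)%R <= m)%N.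
  apply: size_coef0; last by rewrite coefB hc subrr.
  by rewrite (leq_trans (size_polyD _ _)) // size_polyN geq_max hq.
have [Q1 [hQ1 e1]] := IH _ hq'.
exists (Q0 + Q1); split.
  by rewrite (leq_trans (size_polyD _ _)) // geq_max hQ0 (leq_trans hQ1).
by rewrite dltD e1 addrC subrK.
Qed.

Lemma poly_of_delta k (f : nat -> rat) :
  (forall n, act (('X - 1) ^+ k) f n = 0) ->
  exists p : {poly rat}, (size p <= k)%N /\ forall n, f n = p.[n%:R].
Proof.
elim: k f => [|k IH] f hf.
  exists 0; split; first by rewrite size_poly0.
  by move=> n; rewrite horner0 -(hf n) expr0 act1.
have hg : forall n, act (('X - 1) ^+ k) (act ('X - 1) f) n = 0.
  by move=> n; rewrite -actM -exprSr hf.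
have [q [hq eq]] := IH _ hg.
have [Q [hQ eQ]] := antidiff hq.
exists (Q + (f 0%N - Q.[0])%:P); split.
  by rewrite (leq_trans (size_polyD _ _)) // geq_max hQ (leq_trans (size_polyC_leq1 _)).
have h : forall n, f n - Q.[n%:R] = f 0%N - Q.[0].
  elim=> [|n IHn] //; rewrite -IHn.
  have e := eq n; rewrite actX1 -eQ horner_dlt in e.
  rewrite -natr1; lra.
by move=> n; rewrite hornerD hornerC -(h n); ring.
Qed.

Lemma big_nat_bound (x : rat) : exists N : nat, forall n, (N <= n)%N -> x < (n.+1)%:R.
Proof.
exists (Num.Def.archi_bound `|x|) => n hn.
apply: (le_lt_trans (ler_norm x)); apply: (lt_le_trans (archi_boundP (normr_ge0 x))).
by rewrite ler_nat (leq_trans hn).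
Qed.

Lemma poly_upper (p : {poly rat}) m : (size p <= m.+1)%N ->
  exists K, 0 <= K /\ forall n : nat, `|p.[n%:R]| <= K * (n.+1)%:R ^+ m.
Proof.
move=> hs; exists (\sum_(i < size p) `|p`_i|); split.
  by apply: sumr_ge0 => i _.
move=> n; rewrite horner_coef mulr_suml.
apply: (le_trans (ler_norm_sum _ _ _)); apply: ler_sum => i _.
rewrite normrM normrX; apply: ler_wpM2l => //.
have h1 : `|n%:R : rat| <= (n.+1)%:R by rewrite ger0_norm // ler_nat.
apply: (le_trans (lerXn2r _ _ _ h1)) => //; first by rewrite nnegrE.
  by rewrite nnegrE.
apply: ler_weXn2l; first by rewrite ler1n.
by rewrite -ltnS (leq_trans (ltn_ord i)).
Qed.

Lemma poly_lower (p : {poly rat}) m c : (size p <= m.+1)%N -> p`_m = c -> 0 < c ->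
  exists N, forall n, (N <= n)%N -> c / 2 * (n.+1)%:R ^+ m <= p.[n%:R].
Proof.
move=> hs hc c0.
set q := p - c *: ('X + 1) ^+ m.
have hq1 : (size q <= m.+1)%N.
  rewrite (leq_trans (size_polyD _ _)) // size_polyN geq_max hs /=.
  rewrite (leq_trans (size_scale_leq _ _)) // (leq_trans (size_exp_leq _ _)) //.
  by rewrite size_XaddC /= mul1n.
have hq : (size q <= m)%N.
  by apply: size_coef0 => //; rewrite coefB coefZ coefXD1n binn mulr1 hc subrr.
have hp : forall n : nat, p.[n%:R] = c * (n.+1)%:R ^+ m + q.[n%:R].
  by move=> n; rewrite /q hornerD hornerN hornerZ horner_exp hornerD hornerX hornerC natr1 addrC subrK.
clearbody q; case: m hs hc hq1 hq hp => [|m] hs hc hq1 hq hp.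
  exists 0%N => n _; move: hq; rewrite leqn0 size_poly_eq0 => /eqP q0.
  rewrite hp q0 horner0 addr0 !expr0 !mulr1; lra.
have [K [K0 hK]] := poly_upper hq.
have [N hN] := big_nat_bound (2 * K / c).
exists N => n hn; rewrite hp.
have hX := hN n hn; set X := (n.+1)%:R : rat in hX *.
have X0 : 0 < X by rewrite ltr0n.
have XM0 : 0 < X ^+ m by rewrite exprn_gt0.
have hKn := hK n; rewrite -/X in hKn.
have : 2 * K < c * X.
  by move: hX; rewrite (ltr_pdivrMr _ _ c0) (mulrC X).
rewrite exprS => hKX.
have h2 : - (K * X ^+ m) <= q.[n%:R] by rewrite lerNl (le_trans _ hKn) // -normrN ler_norm.
have : K * X ^+ m <= c / 2 * X * X ^+ m.
  by rewrite ler_pM2r //; lra.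
nra.
Qed.

Definition LP (p : {poly rat}) : {poly rat} := (dlt p) ^+ 2 - p * dlt (dlt p).

Lemma horner_LP (p : {poly rat}) (n : nat) :
  (LP p).[n%:R] = p.[(n.+1)%:R] ^+ 2 - p.[n%:R] * p.[(n.+2)%:R].
Proof.
rewrite /LP hornerD hornerN hornerM expr2 hornerM !horner_dlt -!natr1 -!addrA.
rewrite (_ : 1 + 1 = 2 :> rat) //; ring.
Qed.

Lemma LP_top e (p : {poly rat}) c : (size p <= e.+3)%N -> p`_e.+2 = c ->
  (size (LP p) <= (e + e).+3)%N /\ (LP p)`_((e + e).+2) = (e.+2)%:R * c ^+ 2.
Proof.
move=> hs hc.
have [h1 h1c] := dlt_top hs; rewrite /= hc in h1c.
have [h2 h2c] := dlt_top h1; rewrite /= h1c in h2c.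
have [h3 h3c] := topM h1 h1.
have [h4 h4c] := topM hs h2.
rewrite /LP; split.
  rewrite (leq_trans (size_polyD _ _)) // size_polyN geq_max.
  by rewrite expr2 (leq_trans h3) ?(leq_trans h4) //; lia.
rewrite coefB expr2 (_ : (e + e).+2 = e.+1 + e.+1)%N; last lia.
rewrite h3c (_ : (e.+1 + e.+1 = e.+2 + e)%N); last lia.
rewrite h4c h1c h2c hc -!natr1; ring.
Qed.

Lemma prodb (a b A B : rat) : 0 <= a -> 0 <= b -> a <= A -> b <= B -> a * b <= A * B.
Proof. by move=> a0 b0 hA hB; apply: ler_pM. Qed.

Lemma step (w : nat -> rat) (p : {poly rat}) d g C :
  (size p <= d.+1)%N ->
  (forall n, `|w n - p.[n%:R]| * (n.+1)%:R ^+ g.+2 <= C * (n.+1)%:R ^+ d) ->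
  exists C', forall n, `|Lhat w n - (LP p).[n%:R]| * (n.+1)%:R ^+ g.+2
                       <= C' * (n.+1)%:R ^+ (d + d).
Proof.
move=> hs hw.
have [K [K0 hK]] := poly_upper hs.
have C0 : 0 <= C.
  by have := hw 0%N; rewrite !expr1n !mulr1 => /(le_trans (normr_ge0 _)).
set K' := K * 3%:R ^+ d; set B := C * 3%:R ^+ d.
have K'0 : 0 <= K' by rewrite mulr_ge0 // exprn_ge0.
have B0 : 0 <= B by rewrite mulr_ge0 // exprn_ge0.
exists (4%:R * K' * B + 2%:R * B * B) => n.
set X := (n.+1)%:R : rat; set Y := X ^+ g.+2; set Z := X ^+ d.
have X1 : 1 <= X by rewrite ler1n.
have Y1 : 1 <= Y by rewrite exprn_ege1.
have Z0 : 0 <= Z by rewrite exprn_ge0 // (le_trans ler01).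
have bnd : forall i, (i <= 2)%N ->
    `|p.[(n + i)%:R]| <= K' * Z /\ `|w (n + i)%N - p.[(n + i)%:R]| * Y <= B * Z.
  move=> i hi.
  have hX : (n + i).+1%:R <= 3%:R * X by rewrite /X -natrM ler_nat; lia.
  have hXd : (n + i).+1%:R ^+ d <= 3%:R ^+ d * Z.
    by rewrite /Z -exprMn; apply: lerXn2r => //; rewrite nnegrE ?mulr_ge0 // /X ?ler0n.
  split.
    apply: (le_trans (hK _)); rewrite /K' -mulrA; exact: ler_wpM2l.
  have h1 : `|w (n + i)%N - p.[(n + i)%:R]| * Y <=
     `|w (n + i)%N - p.[(n + i)%:R]| * (n + i).+1%:R ^+ g.+2.
    apply: ler_wpM2l => //; apply: lerXn2r; rewrite ?nnegrE //.
    by rewrite ler_nat; lia.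
  apply: (le_trans h1); apply: (le_trans (hw _)); rewrite /B -mulrA; exact: ler_wpM2l.
clearbody K' B.
have [hp0 he0] := bnd 0%N isT; have [hp1 he1] := bnd 1%N isT.
have [hp2 he2] := bnd 2%N isT.
rewrite addn0 in hp0 he0; rewrite addn1 in hp1 he1; rewrite addn2 in hp2 he2.
have hee : forall e : rat, `|e| * Y <= B * Z -> `|e| <= B * Z.
  by move=> e h; apply: le_trans h; rewrite ler_peMr.
rewrite /Lhat horner_LP.
set P0 := p.[n%:R] in hp0 he0 *; set P1 := p.[n.+1%:R] in hp1 he1 *.
set P2 := p.[n.+2%:R] in hp2 he2 *.
set E0 := w n - P0 in he0; set E1 := w n.+1 - P1 in he1; set E2 := w n.+2 - P2 in he2.
have -> : w n.+1 ^+ 2 - w n * w n.+2 - (P1 ^+ 2 - P0 * P2) =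
   2%:R * P1 * E1 + E1 * E1 - P0 * E2 - E0 * P2 - E0 * E2 by rewrite /E0 /E1 /E2; ring.
have Y0 : 0 <= Y by apply: le_trans Y1.
have t1 : `|2%:R * P1 * E1| * Y <= 2%:R * (K' * Z * (B * Z)).
  rewrite !normrM ger0_norm // -!mulrA; apply: ler_wpM2l => //; rewrite (mulrA K').
  by apply: prodb => //; exact: mulr_ge0.
have t2 : `|E1 * E1| * Y <= B * Z * (B * Z).
  by rewrite normrM -(mulrA `|E1|); apply: prodb => //; [exact: mulr_ge0|exact: (hee _ he1)].
have t3 : `|P0 * E2| * Y <= K' * Z * (B * Z).
  by rewrite normrM -(mulrA `|P0|); apply: prodb => //; exact: mulr_ge0.
have t4 : `|E0 * P2| * Y <= K' * Z * (B * Z).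
  by rewrite normrM (mulrC `|E0|) -(mulrA `|P2|); apply: prodb => //; exact: mulr_ge0.
have t5 : `|E0 * E2| * Y <= B * Z * (B * Z).
  by rewrite normrM -(mulrA `|E0|); apply: prodb => //; [exact: mulr_ge0|exact: (hee _ he0)].
have tri : `|2%:R * P1 * E1 + E1 * E1 - P0 * E2 - E0 * P2 - E0 * E2| <=
   `|2%:R * P1 * E1| + `|E1 * E1| + `|P0 * E2| + `|E0 * P2| + `|E0 * E2|.
  do 3! (apply: (le_trans (ler_normB _ _)); rewrite lerD2r).
  exact: ler_normD.
rewrite exprD -/Z.
apply: (le_trans (ler_wpM2r Y0 tri)).
have e : (4%:R * K' * B + 2%:R * B * B) * (Z * Z) =
  2%:R * (K' * Z * (B * Z)) + B * Z * (B * Z) + K' * Z * (B * Z) + K' * Z * (B * Z)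
  + B * Z * (B * Z) by ring.
rewrite e; lra.
Qed.

Lemma divX2 (a C X : rat) g m : 0 < X ->
  a * X ^+ g.+2 <= C * X ^+ m.+2 -> a * X ^+ g <= C * X ^+ m.
Proof.
move=> X0; rewrite -addn2 -(addn2 m) !exprD !mulrA !ler_pM2r //.
Qed.

Lemma iter_main (w : nat -> rat) r (p0 : {poly rat}) e0 c0 C0 :
  (size p0 <= e0.+3)%N -> p0`_e0.+2 = c0 -> 0 < c0 ->
  (forall n, `|w n - p0.[n%:R]| * (n.+1)%:R ^+ (r.*2.+1) <= C0 * (n.+1)%:R ^+ e0.+2) ->
  forall j, (j <= r)%N -> exists (p : {poly rat}) (e : nat) (c C : rat), [/\ (size p <= e.+3)%N, p`_e.+2 = c, 0 < c &
    forall n, `|Lhat_iter j w n - p.[n%:R]| * (n.+1)%:R ^+ ((r - j).*2.+1)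
       <= C * (n.+1)%:R ^+ e.+2].
Proof.
move=> hs hc c0p hw; elim=> [|j IH] hj.
  by exists p0, e0, c0, C0; split => // n; rewrite subn0.
have [p [e [c [C [hs' hc' cp hC]]]]] := IH (ltnW hj).
have hg : ((r - j).*2.+1 = ((r - j.+1).*2.+1).+2)%N by lia.
have hC2 : forall n, `|Lhat_iter j w n - p.[n%:R]| * (n.+1)%:R ^+ ((r - j.+1).*2.+1).+2
    <= C * (n.+1)%:R ^+ e.+2 by move=> n; rewrite -hg.
have [C' hC'] := step hs' hC2.
have [hs2 hc2] := LP_top hs' hc'.
exists (LP p), (e + e)%N, (e.+2%:R * c ^+ 2), C'; split => //.
  by rewrite mulr_gt0 // ?ltr0n // exprn_gt0.
move=> n; rewrite /Lhat_iter iterS -/(Lhat_iter j w).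
apply: divX2; first by rewrite ltr0n.
by rewrite (_ : (e + e).+4 = e.+2 + e.+2)%N; [exact: hC'|lia].
Qed.

Lemma eventually_pos (v : nat -> rat) (p : {poly rat}) e c C h :
  (size p <= e.+3)%N -> p`_e.+2 = c -> 0 < c ->
  (forall n, `|v n - p.[n%:R]| * (n.+1)%:R ^+ h.+1 <= C * (n.+1)%:R ^+ e.+2) ->
  exists N, forall n, (N <= n)%N -> 0 < v n.
Proof.
move=> hs hc cp hv.
have [N1 hN1] := poly_lower hs hc cp.
have [N2 hN2] := big_nat_bound (2 * C / c).
exists (maxn N1 N2) => n hn.
have hn1 : (N1 <= n)%N by apply: leq_trans hn; exact: leq_maxl.
have hn2 : (N2 <= n)%N by apply: leq_trans hn; exact: leq_maxr.
have := hN1 n hn1; have := hN2 n hn2; have := hv n.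
set X := (n.+1)%:R : rat; set Z := X ^+ e.+2.
have X1 : 1 <= X by rewrite ler1n.
have Z0 : 0 < Z by rewrite exprn_gt0 // (lt_le_trans ltr01).
have XX : X <= X ^+ h.+1 by rewrite ler_eXnr.
move=> h1 h2 h3.
have h1' : `|v n - p.[n%:R]| * X <= C * Z.
  by apply: le_trans h1; apply: ler_wpM2l.
have h2' : 2 * C < c * X by move: h2; rewrite (ltr_pdivrMr _ _ cp) (mulrC X).
have h4 : p.[n%:R] - v n <= `|v n - p.[n%:R]| by rewrite -normrN opprB ler_norm.
have h5 : (p.[n%:R] - v n) * X <= C * Z.
  by apply: le_trans h1'; apply: ler_wpM2r => //; apply: le_trans X1.
have h6 : c / 2 * Z * X - C * Z > 0.
  have -> : c / 2 * Z * X - C * Z = Z * (c * X - 2 * C) / 2 by field.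
  by rewrite divr_gt0 // mulr_gt0 // subr_gt0.
have h7 : 0 < v n * X by nra.
by move: h7; rewrite pmulr_lgt0 // (lt_le_trans ltr01).
Qed.

Lemma fin_max (P : nat -> nat -> Prop) r :
  (forall j, (1 <= j <= r)%N -> exists N, forall n, (N <= n)%N -> P j n) ->
  exists N, forall j n, (1 <= j <= r)%N -> (N <= n)%N -> P j n.
Proof.
elim: r => [|r IH] h.
  by exists 0%N => j n /andP[h1 h2]; move: h2; rewrite leqNgt h1.
have [N1 hN1] : exists N, forall j n, (1 <= j <= r)%N -> (N <= n)%N -> P j n.
  by apply: IH => j hj; apply: h; move: hj => /andP[a b]; rewrite a /= ltnW.
have [N2 hN2] := h r.+1 (leqnn _).
exists (maxn N1 N2) => j n hj hn; case: (ltngtP j r.+1) => hjr.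
- apply: hN1; first by case/andP: hj => -> _ /=; rewrite -ltnS.
  by apply: leq_trans hn; exact: leq_maxl.
- by case/andP: hj => _; rewrite leqNgt hjr.
- by rewrite hjr; apply: hN2; apply: leq_trans hn; exact: leq_maxr.
Qed.

Lemma analytic (w : nat -> rat) r (p0 : {poly rat}) e0 c0 C0 :
  (size p0 <= e0.+3)%N -> p0`_e0.+2 = c0 -> 0 < c0 ->
  (forall n, `|w n - p0.[n%:R]| * (n.+1)%:R ^+ (r.*2.+1) <= C0 * (n.+1)%:R ^+ e0.+2) ->
  asymp_r_log_concave r w.
Proof.
move=> hs hc cp hw; rewrite /asymp_r_log_concave.
apply: fin_max => j /andP[_ hj].
have [p [e [c [C [hs' hc' cp' hC]]]]] := iter_main hs hc cp hw hj.
exact: eventually_pos hs' hc' cp' hC.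
Qed.

Definition UL (L : nat) : {poly rat} := \sum_(i < L) 'X^i.

Lemma XsubU L : ('X - 1) * UL L = 'X^L - 1.
Proof. by rewrite subrX1. Qed.

Lemma periodic_bound (G : nat -> rat) L : (0 < L)%N -> (forall n, G (n + L)%N = G n) ->
  forall n, `|G n| <= \sum_(i < L) `|G i|.
Proof.
move=> L0 h.
have hp : forall q r, G (r + q * L)%N = G r.
  elim=> [|q IH] r; first by rewrite mul0n addn0.
  by rewrite mulSnr addnA h IH.
move=> n; rewrite {1}(divn_eq n L) addnC hp.
rewrite (bigD1 (Ordinal (ltn_pmod n L0))) //= lerDl.
by apply: sumr_ge0 => i _.
Qed.

Lemma tele_bound (G : nat -> rat) L D e : (0 < L)%N -> 0 <= D ->
  (forall x, `|G (x + L)%N - G x| <= D * (x.+1)%:R ^+ e) ->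
  exists C, forall n, `|G n| <= C * (n.+1)%:R ^+ e.+1.
Proof.
move=> L0 D0 h.
set B0 := \sum_(i < L) `|G i|.
have B00 : 0 <= B0 by apply: sumr_ge0.
have small : forall n, (n < L)%N -> `|G n| <= B0.
  move=> n hn; rewrite /B0 (bigD1 (Ordinal hn)) //= lerDl.
  by apply: sumr_ge0 => i _.
have claim : forall n, `|G n| <= B0 + D * (n.+1)%:R ^+ e.+1.
  elim/ltn_ind => n IH.
  case: (ltnP n L) => hn.
    by apply: (le_trans (small n hn)); rewrite lerDl mulr_ge0 // exprn_ge0.
  set x := (n - L)%N.
  have ex : (x + L)%N = n by rewrite /x; lia.
  have hx' : (x < n)%N by rewrite /x; lia.
  have h1 := IH x hx'.
  rewrite -ex.
  have h2 := h x.
  have h3 : `|G (x + L)%N| <= `|G x| + `|G (x + L)%N - G x|.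
    by rewrite -{1}(subrK (G x) (G (x + L)%N)) addrC; apply: ler_normD.
  set Y := (x.+1)%:R : rat in h1 h2.
  have Y0 : 0 <= Y by rewrite ler0n.
  have hY : Y ^+ e.+1 + Y ^+ e <= (Y + 1) ^+ e.+1.
    rewrite exprSr (exprSr (Y + 1)) -{2}(mulr1 (Y ^+ e)) -mulrDr.
    apply: ler_wpM2r; first by rewrite addr_ge0.
    by apply: lerXn2r; rewrite ?nnegrE ?addr_ge0 // lerDl.
  have hY2 : (Y + 1) ^+ e.+1 <= ((x + L).+1)%:R ^+ e.+1.
    apply: lerXn2r; rewrite ?nnegrE ?addr_ge0 //.
    by rewrite /Y natr1 ler_nat; lia.
  have : D * (Y ^+ e.+1 + Y ^+ e) <= D * ((x + L).+1)%:R ^+ e.+1.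
    by apply: ler_wpM2l => //; apply: le_trans hY hY2.
  rewrite mulrDr => h4.
  by apply: (le_trans h3); apply: (le_trans (lerD h1 h2)); rewrite -addrA lerD2l.
exists (B0 + D) => n; apply: (le_trans (claim n)).
rewrite mulrDl lerD2r ler_peMr // exprn_ege1 // ler1n //.
Qed.

Lemma XL_act L (G : nat -> rat) n :
  act ('X^L - 1) G n = act ('X - 1) (act (UL L) G) n.
Proof. by rewrite -XsubU actM. Qed.



Lemma Gbound L m (G : nat -> rat) : (0 < L)%N ->
  (forall n, act (UL L ^+ m.+1) G n = 0) ->
  exists C, forall n, `|G n| <= C * (n.+1)%:R ^+ m.
Proof.
move=> L0; elim: m G => [|m IH] G hG.
  exists (\sum_(i < L) `|G i|) => n; rewrite expr0 mulr1.
  apply: periodic_bound => // x.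
  have hG1 : forall y, act (UL L) G y = 0 by move=> y; rewrite -[UL L]expr1 hG.
  have := actXn1 L G x.
  rewrite XL_act actX1 !hG1 subrr => e.
  by apply/eqP; rewrite -subr_eq0 -e.
set H := act (UL L) G.
have hH : forall n, act (UL L ^+ m.+1) H n = 0.
  by move=> n; rewrite /H -actM -exprSr hG.
have [C hC] := IH H hH.
have C0 : 0 <= C.
  by have := hC 0%N; rewrite expr1n mulr1 => /(le_trans (normr_ge0 _)).
apply: (@tele_bound G L (C * (2%:R ^+ m + 1)) m) => //.
  by rewrite mulr_ge0 // addr_ge0 // exprn_ge0.
move=> x; have e1 : G (x + L)%N - G x = H x.+1 - H x.
  by rewrite -actXn1 XL_act actX1.
rewrite e1; apply: (le_trans (ler_normB _ _)).
have h1 := hC x.+1; have h2 := hC x.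
set Y := (x.+1)%:R : rat in h2 *.
have Y1 : 1 <= Y by rewrite ler1n.
have h3 : (x.+2)%:R ^+ m <= 2%:R ^+ m * Y ^+ m.
  rewrite -exprMn; apply: lerXn2r; rewrite ?nnegrE ?mulr_ge0 ?ler0n //.
  by rewrite /Y -natrM ler_nat; lia.
have h4 : C * (x.+2)%:R ^+ m <= C * (2%:R ^+ m * Y ^+ m) by apply: ler_wpM2l.
rewrite mulrDr mulr1 mulrDl -mulrA.
by apply: lerD => //; apply: le_trans h1 _.
Qed.

Lemma pA_rec (a : nat -> nat) k n : (0 < a k)%N ->
  pA a k.+1 (n + a k) = (pA a k (n + a k) + pA a k.+1 n)%N.
Proof.
move=> ha /=.
have hd : ((n + a k) %/ a k = (n %/ a k).+1)%N.
  by rewrite -[X in ((_ + X) %/ _)%N](mul1n (a k)) divnDMl // addn1.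
rewrite hd big_nat_recl //= mul0n subn0.
congr (_ + _)%N; apply: eq_bigr => j _.
by rewrite mulSn (addnC (a k)) subnDr.
Qed.

Definition chi (a : nat -> nat) k : {poly rat} := \prod_(i < k) ('X^(a i) - 1).

Definition Fk (a : nat -> nat) k (n : nat) : rat := (pA a k n)%:R.

Lemma chi_step a k n : (0 < a k)%N ->
  act (chi a k.+1) (Fk a k.+1) n = act (chi a k) (Fk a k) (n + a k)%N.
Proof.
move=> ha; rewrite /chi big_ord_recr /= actM -act_shift.
apply: act_ext => m; rewrite actXn1 /Fk pA_rec // natrD; ring.
Qed.

Lemma chi_ann a k n : (forall i, 0 < a i)%N -> act (chi a k.+1) (Fk a k.+1) n = 0.
Proof.
move=> ha.
have h : forall k n, act (chi a k) (Fk a k) n.+1 = 0.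
  elim=> [|j IH] m.
    by rewrite /chi big_ord0 act1 /Fk /=.
  by rewrite chi_step // addSn IH.
rewrite chi_step // -(prednK (ha k)) addnS; exact: h.
Qed.

Definition phi (d : nat) : {poly rat} := map_poly (intr : int -> rat) ('Phi_d).

Lemma Xn1_phi n : (0 < n)%N -> ('X^n - 1 : {poly rat}) = \prod_(d <- divisors n) phi d.
Proof.
move=> n0; rewrite /phi -rmorph_prod prod_Cyclotomic // rmorphB rmorph1 /=.
by rewrite map_polyXn.
Qed.

Lemma phi1 : phi 1 = 'X - 1.
Proof. by rewrite -['X]expr1 Xn1_phi // big_seq1. Qed.

Lemma divisors_filter m L : (0 < L)%N -> (m %| L)%N ->
  [seq d <- divisors L | (d %| m)%N] = divisors m.
Proof.
move=> L0 mL; have m0 : (0 < m)%N by apply: dvdn_gt0 L0 mL.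
apply: (irr_sorted_eq ltn_trans ltnn).
- exact: (sorted_filter ltn_trans _ (sorted_divisors_ltn L)).
- exact: sorted_divisors_ltn.
- move=> d; rewrite mem_filter -!dvdn_divisors //.
  by apply/idP/idP => [/andP[]//|h]; rewrite h (dvdn_trans h mL).
Qed.

Lemma chi_cyc (a : nat -> nat) k L : (0 < L)%N -> (forall i : 'I_k, a i %| L)%N ->
  (forall i, 0 < a i)%N ->
  chi a k = \prod_(d <- divisors L) phi d ^+ #|[set i : 'I_k | (d %| a i)%N]|.
Proof.
move=> L0 hL ha; rewrite /chi.
transitivity (\prod_(i < k) \prod_(d <- divisors L) (if (d %| a i)%N then phi d else 1)).
  apply: eq_bigr => i _; rewrite Xn1_phi // -(divisors_filter L0 (hL i)) big_filter.
  by rewrite big_mkcond.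
rewrite exchange_big /=; apply: eq_bigr => d _.
rewrite -prodr_const -big_mkcond /=; apply: eq_bigl => i; by rewrite inE.
Qed.

Lemma dvd_prod_seq (r : seq nat) (P : pred nat) (f g : nat -> {poly rat}) :
  (forall d, d \in r -> P d -> f d %| g d) ->
  \prod_(d <- r | P d) f d %| \prod_(d <- r | P d) g d.
Proof.
elim: r => [|x r IH] h; first by rewrite !big_nil dvdpp.
rewrite !big_cons; case: ifP => hx.
  apply: dvdp_mul; first by apply: h; rewrite ?inE ?eqxx.
  by apply: IH => d hd; apply: h; rewrite inE hd orbT.
by apply: IH => d hd; apply: h; rewrite inE hd orbT.
Qed.

Lemma exists_subset (T : finType) (A : {set T}) m : (m <= #|A|)%N ->
  exists S : {set T}, S \subset A /\ #|S| = m.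
Proof.
elim: m => [|m IH] hm; first by exists set0; rewrite sub0set cards0.
have [S [hS cS]] := IH (ltnW hm).
have : ~~ (A \subset S).
  apply/negP => hAS; have := subset_leq_card hAS; rewrite cS leqNgt hm //.
case/subsetPn => x xA xS.
exists (x |: S); split; first by rewrite subUset sub1set xA hS.
by rewrite cardsU1 xS cS.
Qed.

Lemma card_bound (a : nat -> nat) k s d :
  (forall S : {set 'I_k}, #|S| = s -> \big[gcdn/0%N]_(i in S) a i = 1%N) ->
  d != 1%N -> (#|[set i : 'I_k | (d %| a i)%N]| < s)%N.
Proof.
move=> hg d1; rewrite ltnNge; apply/negP => hs.
have [S [hS cS]] := exists_subset hs.
have := hg S cS => e.
have : (d %| \big[gcdn/0%N]_(i in S) a i)%N.
  apply/dvdn_biggcdP => i iS.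
  by have := subsetP hS i iS; rewrite inE.
by rewrite e dvdn1 (negbTE d1).
Qed.

Lemma chi_dvd (a : nat -> nat) k r L : (0 < L)%N -> (forall i : 'I_k, a i %| L)%N ->
  (forall i, 0 < a i)%N -> (2 * r < k)%N ->
  (forall S : {set 'I_k}, #|S| = (k - 2 * r)%N -> \big[gcdn/0%N]_(i in S) a i = 1%N) ->
  chi a k %| ('X - 1) ^+ (2 * r).+1 * ('X^L - 1) ^+ (k - 2 * r).-1.
Proof.
move=> L0 hL ha hk hg.
have d1 : (1 \in divisors L) by rewrite -dvdn_divisors.
rewrite (chi_cyc L0 hL ha) (bigD1_seq 1%N d1 (divisors_uniq L)) /=.
rewrite Xn1_phi // (bigD1_seq 1%N d1 (divisors_uniq L)) /= exprMn -prodrXl.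
rewrite phi1 mulrA -exprD.
have -> : #|[set i : 'I_k | (1 %| a i)%N]| = k.
  rewrite (_ : [set i : 'I_k | (1 %| a i)%N] = [set: 'I_k]) ?cardsT ?card_ord //.
  by apply/setP => i; rewrite !inE dvd1n.
rewrite (_ : ((2 * r).+1 + (k - 2 * r).-1 = k)%N); last lia.
apply: dvdp_mul; first exact: dvdpp.
apply: dvd_prod_seq => d _ hd; apply: dvdp_exp2l.
by rewrite -ltnS prednK ?subn_gt0 //; apply: card_bound.
Qed.

Lemma lead_pos (F : nat -> rat) (p : {poly rat}) e C L M : (0 < L)%N ->
  (size p <= e.+3)%N ->
  (forall n, `|F n - p.[n%:R]| <= C * (n.+1)%:R ^+ e.+1) ->
  0 < M ->
  (forall t, (t.+1)%:R ^+ e.+2 <= M * F (t * L)%N) ->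
  0 < p`_e.+2.
Proof.
move=> L0 hs hF M0 hlow; rewrite ltNge; apply/negP => hc.
set c := p`_e.+2 in hc.
set q := p - c *: 'X^(e.+2).
have hq : (size q <= e.+2)%N.
  apply: size_coef0; last by rewrite coefB coefZ coefXn eqxx mulr1 subrr.
  rewrite (leq_trans (size_polyD _ _)) // size_polyN geq_max hs /=.
  by rewrite (leq_trans (size_scale_leq _ _)) // size_polyXn.
have [K [K0 hK]] := poly_upper hq.
have C0 : 0 <= C.
  by have := hF 0%N; rewrite expr1n mulr1 => /(le_trans (normr_ge0 _)).
have hup : forall n : nat, F n <= (K + C) * (n.+1)%:R ^+ e.+1.
  move=> n.
  have e1 : p.[n%:R] = c * n%:R ^+ e.+2 + q.[n%:R].
    by rewrite /q hornerD hornerN hornerZ hornerXn addrC subrK.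
  have h1 : c * n%:R ^+ e.+2 <= 0 by rewrite mulr_le0_ge0 // exprn_ge0.
  have h2 : q.[n%:R] <= K * (n.+1)%:R ^+ e.+1 by apply: le_trans (ler_norm _) (hK n).
  have h3 : F n - p.[n%:R] <= C * (n.+1)%:R ^+ e.+1 by apply: le_trans (ler_norm _) (hF n).
  rewrite mulrDl; lra.
set B := M * ((K + C) * L%:R ^+ e.+1).
have [t ht] := big_nat_bound B.
have := ht t (leqnn t); have := hlow t; have := hup (t * L)%N.
set X := (t.+1)%:R : rat.
have X0 : 0 < X by rewrite ltr0n.
have hX : ((t * L).+1)%:R ^+ e.+1 <= L%:R ^+ e.+1 * X ^+ e.+1.
  rewrite -exprMn; apply: lerXn2r; rewrite ?nnegrE ?mulr_ge0 ?ler0n //.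
  by rewrite /X -natrM ler_nat; nia.
move=> h1 h2 h3.
have h4 : M * F (t * L)%N <= M * ((K + C) * (L%:R ^+ e.+1 * X ^+ e.+1)).
  apply: ler_wpM2l; first exact: ltW.
  apply: le_trans h1 _; apply: ler_wpM2l => //; exact: addr_ge0.
have h5 : X ^+ e.+2 <= B * X ^+ e.+1.
  by apply: le_trans h2 _; apply: le_trans h4 _; rewrite /B !mulrA.
move: h5; rewrite exprSr mulrC ler_pM2r ?exprn_gt0 // => h5.
by move: h3; rewrite ltNge h5.
Qed.

Lemma from_i (g C X : rat) h j : 1 <= X ->
  g * X ^+ h.+1 <= C * X ^+ j.+1 -> 0 <= g -> g <= C * X ^+ j.
Proof.
move=> X1 hg g0.
have X0 : 0 < X by apply: lt_le_trans X1.
have h1 : g * X <= g * X ^+ h.+1 by apply: ler_wpM2l => //; apply: ler_eXnr.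
have : g * X <= C * X ^+ j * X by rewrite -mulrA -exprSr; apply: le_trans hg.
by rewrite ler_pM2r.
Qed.

Lemma act_ann (p : {poly rat}) f n : (forall m, f m = 0) -> act p f n = 0.
Proof. by move=> h; rewrite (act_ext p n h) act_zero. Qed.

Lemma decomp (a : nat -> nat) r k :
  (forall i, 0 < a i)%N -> (0 < r)%N -> (2 * r < k)%N ->
  (forall S : {set 'I_k}, #|S| = (k - 2 * r)%N -> \big[gcdn/0%N]_(i in S) a i = 1%N) ->
  exists (p0 : {poly rat}) (e0 : nat) (c0 C0 : rat),
    [/\ (size p0 <= e0.+3)%N, p0`_e0.+2 = c0, 0 < c0 &
     forall n, `|Fk a k n - p0.[n%:R]| * (n.+1)%:R ^+ (r.*2.+1) <= C0 * (n.+1)%:R ^+ e0.+2].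
Proof.
move=> ha r0 hk hg.
have [e ek] : exists e, k = e.+3 by exists (k - 3)%N; lia.
subst k.
set k := e.+3.
set L := \prod_(i < k) a i.
have L0 : (0 < L)%N by apply: prodn_gt0.
have hL : forall i : 'I_k, (a i %| L)%N.
  by move=> i; rewrite /L (bigD1 i) //= dvdn_mulr.
set m := (k - 2 * r).-1.
have hdiv := chi_dvd L0 hL ha hk hg.
set F := Fk a k.
have hT : forall n, act (('X - 1) ^+ (2 * r).+1 * ('X^L - 1) ^+ m) F n = 0.
  move=> n; rewrite -(divpK hdiv) actM.
  by apply: act_ann => y; apply: chi_ann.
have eT : ('X - 1) ^+ (2 * r).+1 * ('X^L - 1) ^+ m = ('X - 1) ^+ k * UL L ^+ m.
  rewrite -XsubU exprMn mulrA -exprD; congr (_ ^+ _ * _); rewrite /m /k; lia.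
rewrite eT in hT.
have cop : coprimep (('X - 1) ^+ k) (UL L ^+ m).
  apply: coprimep_expl; apply: coprimep_expr.
  rewrite coprimep_sym -polyC1 coprimep_XsubC rootE /UL horner_sum.
  under eq_bigr => i _ do rewrite hornerXn expr1n.
  by rewrite sumr_const card_ord pnatr_eq0 -lt0n L0.
have [[u v] /= huv] := Bezout_eq1_coprimepP _ _ cop.
set P := act (v * UL L ^+ m) F.
set G := act (u * ('X - 1) ^+ k) F.
have hF : forall n, F n = P n + G n.
  by move=> n; rewrite /P /G -actD addrC huv act1.
have hP : forall n, act (('X - 1) ^+ k) P n = 0.
  move=> n; rewrite /P -actM mulrCA actM.
  by apply: act_ann.
have hG : forall n, act (UL L ^+ m) G n = 0.
  move=> n; rewrite /G -actM mulrCA (mulrC (UL L ^+ m)) actM.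
  by apply: act_ann.
have [p [sp hp]] := poly_of_delta hP.
have [C hC] : exists C, forall n, `|G n| * (n.+1)%:R ^+ (r.*2.+1) <= C * (n.+1)%:R ^+ e.+2.
  case hm: m => [|m'].
    exists 0 => n.
    have h0 : G n = 0 by have := hG n; rewrite hm expr0 act1.
    by rewrite h0 normr0 !mul0r.
  have hG' : forall n, act (UL L ^+ m'.+1) G n = 0 by move=> n; rewrite -hm.
  have [C hC] := @Gbound L m' G L0 hG'.
  exists C => n.
  have ee : (e.+2 = m' + r.*2.+1)%N by move: hm; rewrite /m /k; lia.
  rewrite ee exprD mulrA; apply: ler_wpM2r; first by rewrite exprn_ge0.
  exact: hC.
have hE : forall n, `|F n - p.[n%:R]| * (n.+1)%:R ^+ (r.*2.+1) <= C * (n.+1)%:R ^+ e.+2.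
  by move=> n; rewrite hF -hp addrC addKr.
have hE2 : forall n, `|F n - p.[n%:R]| <= C * (n.+1)%:R ^+ e.+1.
  by move=> n; apply: from_i (hE n) _; rewrite ?ler1n.
have hlow : forall t, (t.+1)%:R ^+ e.+2 <= (e.+2)`!%:R * F (t * L)%N.
  move=> t; rewrite /F /Fk -natrX -natrM ler_nat mulnC.
  apply: leq_trans (H_lower (e.+2) t) _; rewrite leq_mul2r; apply/orP; right.
  apply: pA_lower => // i hi; exact: (hL (Ordinal hi)).
have M0 : 0 < (e.+2)`!%:R :> rat by rewrite ltr0n fact_gt0.
have c0 := lead_pos L0 sp hE2 M0 hlow.
by exists p, e, p`_e.+2, C; split.
Qed.


Unset Implicit Arguments.

(* The sequence a_1, a_2, ... of the paper is a 0, a 1, ... here. *)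
Theorem theorem4p7 (a : nat -> nat) (r k : nat) :
  (forall i, 0 < a i)%N ->
  (forall i j, (i <= j)%N -> (a i <= a j)%N) ->
  (0 < r)%N ->
  (2 * r < k)%N ->
  (forall S : {set 'I_k}, #|S| = (k - 2 * r)%N ->
     \big[gcdn/0%N]_(i in S) a i = 1%N) ->
  asymp_r_log_concave r (fun n => (pA a k n)%:R : rat).
Proof.
move=> ha _ r0 hk hg.
have [p0 [e0 [c0 [C0 [h1 h2 h3 h4]]]]] := decomp ha r0 hk hg.
exact: (analytic h1 h2 h3 h4).
Qed.
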